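(* For every infinite cardinal $\kappa \le 2^{\aleph_0}$ there exist disjoint sets $A, B\subseteq \mathbb{R}$ with $|A|=|B|=\kappa$ such that $A$ and $B$ are both homogeneous and everywhere isomorphic. In particular, for every infinite cardinal $\kappa\le 2^{\aleph_0}$ there is a homogeneous suborder of $\mathbb{R}$ of cardinality $\kappa$.
   Context: A suborder $X\subseteq\mathbb{R}$ is homogeneous if $X\cong X\cap I$ (order-isomorphism) for every open interval $I=(a,b)$ with $-\infty\le a<b\le\infty$. Disjoint $A,B\subseteq\mathbb{R}$ are everywhere isomorphic if $A\cap I\cong B\cap I$ for every such open interval $I$. *)

(* Defs.v *)
From Stdlib Require Import Reals List.
From Coquelicot Require Import Rbar.
Open Scope R_scope.

Definition subset_R := R -> Prop.

Definition open_int (a b : Rbar) : subset_R :=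
  fun x => Rbar_lt a (Finite x) /\ Rbar_lt (Finite x) b.

Definition inter (X Y : subset_R) : subset_R := fun x => X x /\ Y x.

Definition order_iso (X Y : subset_R) : Prop :=
  exists f : R -> R,
    (forall x, X x -> Y (f x)) /\
    (forall y, Y y -> exists x, X x /\ f x = y) /\
    (forall x y, X x -> X y -> x < y -> f x < f y).

Definition homogeneous (X : subset_R) : Prop :=
  forall a b : Rbar, Rbar_lt a b -> order_iso X (inter X (open_int a b)).

Definition everywhere_isomorphic (A B : subset_R) : Prop :=
  forall a b : Rbar, Rbar_lt a b ->
    order_iso (inter A (open_int a b)) (inter B (open_int a b)).

Definition disjoint (A B : subset_R) : Prop := forall x, ~ (A x /\ B x).

Definition equipotent (X Y : subset_R) : Prop :=
  exists f : R -> R,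
    (forall x, X x -> Y (f x)) /\
    (forall y, Y y -> exists x, X x /\ f x = y) /\
    (forall x y, X x -> X y -> f x = f y -> x = y).

Definition infinite_set (X : subset_R) : Prop :=
  forall l : list R, exists x, X x /\ ~ In x l.

(* Main.v *)
Require Import Defs.
From Stdlib Require Import Reals List Lra Lia ZArith QArith Qreals Classical ClassicalEpsilon Cantor.
From Coquelicot Require Import Rbar.
From mathcomp Require Import all_boot classical_sets functions cardinality boolp.
From mathcomp Require Import Rstruct Rstruct_topology.
Local Open Scope classical_set_scope.
Import Defs.

Lemma zorn_sets (T:Type) (P : (T->Prop)->Prop) :
 (forall F : (T->Prop)->Prop, (forall X, F X -> P X) ->
    (forall X Y, F X -> F Y -> (forall x, X x -> Y x) \/ (forall x, Y x -> X x)) ->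
    P (fun x => exists X, F X /\ X x)) ->
 exists A, P A /\ forall B, (forall x, A x -> B x) -> (exists x, B x /\ ~ A x) -> ~ P B.
Proof.
move=> H.
have Hc : forall F : set (set T), F `<=` P -> total_on F subset -> P (\bigcup_(X in F) X).
  move=> F FP Ftot.
  have -> : \bigcup_(X in F) X = (fun x => exists X, F X /\ X x).
    by apply/funext => x; apply/propext; split => [[X FX Xx]|[X [FX Xx]]]; exists X.
  apply: H; first exact: FP.
  move=> X Y FX FY; case: (Ftot X Y FX FY) => ?; [left|right]; done.
have [A [PA Amax]] := @Zorn_bigcup T P Hc.
exists A; split => // B AB [x [Bx nAx]] PB; apply: (Amax B) => //.
split => // BA; exact: nAx (BA x Bx).
Qed.

Lemma CB_R (X Y : R -> Prop) (f g : R -> R) :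
  (forall x, X x -> Y (f x)) -> (forall x y, X x -> X y -> f x = f y -> x = y) ->
  (forall x, Y x -> X (g x)) -> (forall x y, Y x -> Y y -> g x = g y -> x = y) ->
  exists h : R -> R, (forall x, X x -> Y (h x)) /\ (forall y, Y y -> exists x, X x /\ h x = y) /\
    (forall x y, X x -> X y -> h x = h y -> x = y).
Proof.
move=> fXY finj gYX ginj.
have h1 : card_le X Y.
  apply/pcard_leP; apply/injfunPex; exists f.
    by move=> x Xx; apply: fXY.
  by move=> x y; rewrite !inE => Xx Xy; apply: finj.
have h2 : card_le Y X.
  apply/pcard_leP; apply/injfunPex; exists g.
    by move=> x Xx; apply: gYX.
  by move=> x y; rewrite !inE => Xx Xy; apply: ginj.
have /card_set_bijP [h [hf hi hs]] := Cantor_Bernstein h1 h2.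
exists h; split; first by move=> x Xx; apply: hf.
split; first by move=> y Yy; have [x Xx <-] := hs y Yy; exists x.
by move=> x y Xx Xy; apply: hi; rewrite inE.
Qed.

Definition inf_set {T} (X : T -> Prop) := forall l : list T, exists x, X x /\ ~ In x l.

Lemma inj_seq_inf {T} (X : T -> Prop) (s : nat -> T) :
  (forall n, X (s n)) -> (forall n m, s n = s m -> n = m) -> inf_set X.
Proof.
intros HX Hi.
assert (G : forall l N, exists n, le N n /\ ~ In (s n) l).
{ induction l as [|a l IH]; intros N.
  - exists N; split; [lia| simpl; tauto].
  - destruct (IH N) as [n [Hn Hn']].
    destruct (Classical_Prop.classic (s n = a)) as [E|E].
    + destruct (IH (S n)) as [m [Hm Hm']].
      exists m; split; [lia|]. simpl. intros [E2|E2]; [|tauto].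
      rewrite <- E in E2. apply Hi in E2. lia.
    + exists n; split; [lia|]. simpl. intros [E2|E2]; [congruence|tauto]. }
intros l. destruct (G l O) as [n [_ Hn]]. exists (s n); auto.
Qed.

Fixpoint seqL {T} (c : list T -> T) (n : nat) : list T :=
  match n with O => nil | S k => c (seqL c k) :: seqL c k end.

Lemma seqL_in {T} (c : list T -> T) : forall n m, lt m n -> In (c (seqL c m)) (seqL c n).
Proof.
induction n as [|n IH]; intros m Hm; [lia|].
simpl. destruct (Nat.eq_dec m n) as [->|ne]; [left; reflexivity|right; apply IH; lia].
Qed.

Lemma inf_seq {T} (X : T -> Prop) : inf_set X ->
  exists s : nat -> T, (forall n, X (s n)) /\ (forall n m, s n = s m -> n = m).
Proof.
intros H.
set (c := fun l => proj1_sig (ClassicalEpsilon.constructive_indefinite_description _ (H l))).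
assert (Hc : forall l, X (c l) /\ ~ In (c l) l).
{ intros l. unfold c. destruct (ClassicalEpsilon.constructive_indefinite_description _ (H l)); simpl; auto. }
exists (fun n => c (seqL c n)). split; [intros n; apply Hc|].
intros n m E.
destruct (Nat.lt_total n m) as [L|[L|L]]; auto.
- exfalso. apply (proj2 (Hc (seqL c m))). rewrite <- E. apply seqL_in; auto.
- exfalso. apply (proj2 (Hc (seqL c n))). rewrite E. apply seqL_in; auto.
Qed.

Definition PG {T} (X : T -> Prop) (G : T * nat * T -> Prop) : Prop :=
 (forall x n y, G (x,n,y) -> X x) /\
 (forall x n y y', G (x,n,y) -> G (x,n,y') -> y = y') /\
 (forall x n y x' n', G (x,n,y) -> G (x',n',y) -> x = x' /\ n = n') /\
 (forall x n y m, G (x,n,y) -> exists z, G (x,m,z)) /\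
 (forall x n y, G (x,n,y) -> exists z, G (y,O,z)).

Lemma to_nat_inj : forall p q, Cantor.to_nat p = Cantor.to_nat q -> p = q.
Proof.
intros p q E. rewrite <- (Cantor.cancel_of_to p), <- (Cantor.cancel_of_to q), E. reflexivity.
Qed.

Definition pr (i n : nat) : nat := Cantor.to_nat (i,n).
Arguments pr : simpl never.
Lemma pr_inj i n i' n' : pr i n = pr i' n' -> i = i' /\ n = n'.
Proof. unfold pr. intros E. apply to_nat_inj in E. injection E; auto. Qed.

Lemma CL {T} (X : T -> Prop) : inf_set X ->
  exists f : T -> nat -> T, (forall x n, X x -> X (f x n)) /\
    (forall x n x' n', X x -> X x' -> f x n = f x' n' -> x = x' /\ n = n').
Proof.
intros HX.
destruct (zorn_sets (T*nat*T) (PG X)) as [M [PM Mmax]].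
{ intros F FP Ftot.
  assert (both : forall p q, (exists G, F G /\ G p) -> (exists G, F G /\ G q) ->
            exists G, F G /\ G p /\ G q).
  { intros p q [G1 [F1 G1p]] [G2 [F2 G2q]].
    destruct (Ftot G1 G2 F1 F2) as [S|S].
    - exists G2; auto.
    - exists G1; auto. }
  split; [|split; [|split; [|split]]].
  - intros x n y [G [FG Gp]]. exact (proj1 (FP G FG) x n y Gp).
  - intros x n y y' H1 H2. destruct (both _ _ H1 H2) as [G [FG [A1 A2]]].
    exact (proj1 (proj2 (FP G FG)) x n y y' A1 A2).
  - intros x n y x' n' H1 H2. destruct (both _ _ H1 H2) as [G [FG [A1 A2]]].
    exact (proj1 (proj2 (proj2 (FP G FG))) x n y x' n' A1 A2).
  - intros x n y m [G [FG Gp]].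
    destruct (proj1 (proj2 (proj2 (proj2 (FP G FG)))) x n y m Gp) as [z Hz].
    exists z, G; auto.
  - intros x n y [G [FG Gp]].
    destruct (proj2 (proj2 (proj2 (proj2 (FP G FG)))) x n y Gp) as [z Hz].
    exists z, G; auto. }
destruct PM as [MX [Mf [Mi [Mt Mr]]]].
set (dom := fun x => exists z, M (x,O,z)).
assert (domX : forall x, dom x -> X x). { intros x [z Hz]. eapply MX; eauto. }
assert (domt : forall x m, dom x -> exists z, M (x,m,z)).
{ intros x m [z Hz]. eapply Mt; eauto. }
assert (dom_of : forall x n y, M (x,n,y) -> dom x).
{ intros x n y H. destruct (Mt x n y O H) as [z Hz]. exists z; auto. }
assert (Hfin : exists l, forall x, X x -> ~ dom x -> In x l).
{ apply Classical_Prop.NNPP. intros Hn.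
  assert (Hinf : inf_set (fun x => X x /\ ~ dom x)).
  { intros l. apply Classical_Prop.NNPP. intros H2. apply Hn. exists l. intros x Xx ndx.
    apply Classical_Prop.NNPP. intros nin. apply H2. exists x. auto. }
  destruct (inf_seq _ Hinf) as [c [Hc Hci]].
  set (M' := fun p : T*nat*T => M p \/ exists i n, p = (c i, n, c (pr i n))).
  apply (Mmax M').
  - intros p Hp; left; exact Hp.
  - exists (c O, O, c (pr O O)). split.
    + right. exists O, O. reflexivity.
    + intros Hm. apply (proj2 (Hc O)). exists (c (pr O O)). exact Hm.
  - split; [|split; [|split; [|split]]].
    + intros x n y [H|[i [m E]]]; [eapply MX; eauto|].
      injection E; intros; subst. apply Hc.
    + intros x n y y' [H1|[i [m E1]]] [H2|[i' [m' E2]]].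
      * eapply Mf; eauto.
      * injection E2; intros; subst. exfalso. apply (proj2 (Hc i')). eapply dom_of; eauto.
      * injection E1; intros; subst. exfalso. apply (proj2 (Hc i)). eapply dom_of; eauto.
      * injection E1; injection E2; intros; subst.
        apply Hci in H4. subst. reflexivity.
    + intros x n y x' n' [H1|[i [m E1]]] [H2|[i' [m' E2]]].
      * eapply Mi; eauto.
      * injection E2; intros; subst. exfalso. apply (proj2 (Hc (pr i' m'))).
        destruct (Mr _ _ _ H1) as [z Hz]. exists z; exact Hz.
      * injection E1; intros; subst. exfalso. apply (proj2 (Hc (pr i m))).
        destruct (Mr _ _ _ H2) as [z Hz]. exists z; exact Hz.
      * injection E1 as -> -> ->. injection E2 as Ex En Ey.
        apply Hci, pr_inj in Ey. destruct Ey as [-> ->]. split; auto.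
    + intros x n y m [H|[i [k E]]].
      * destruct (Mt _ _ _ m H) as [z Hz]. exists z; left; exact Hz.
      * injection E; intros; subst. exists (c (pr i m)). right. exists i, m. reflexivity.
    + intros x n y [H|[i [k E]]].
      * destruct (Mr _ _ _ H) as [z Hz]. exists z; left; exact Hz.
      * injection E; intros; subst. exists (c (pr (pr i k)  O)).
        right. exists (pr i k), O. reflexivity. }
destruct Hfin as [l Hl].
assert (Hy0 : exists y0, dom y0).
{ destruct (HX l) as [x [Xx nx]]. exists x. apply Classical_Prop.NNPP. intros nd. apply nx. apply Hl; auto. }
destruct Hy0 as [y0 Hy0].
set (g := fun x n => proj1_sig (ClassicalEpsilon.constructive_indefinite_description
           (fun z => dom x -> M (x,n,z))
           (match excluded_middle_informative (dom x) with
            | left d => match domt x n d with ex_intro z Hz => ex_intro _ z (fun _ => Hz) end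
            | right nd => ex_intro _ x (fun d => False_ind _ (nd d)) end))).
assert (Hg : forall x n, dom x -> M (x,n,g x n)).
{ intros x n d. unfold g. destruct (ClassicalEpsilon.constructive_indefinite_description _ _) as [z Hz]. simpl. auto. }
set (idx := fun x => proj1_sig (ClassicalEpsilon.constructive_indefinite_description
           (fun k => In x l -> nth_error l k = Some x)
           (match excluded_middle_informative (In x l) with
            | left d => match In_nth_error l x d with ex_intro k Hk => ex_intro _ k (fun _ => Hk) end
            | right nd => ex_intro _ O (fun d => False_ind _ (nd d)) end))).
assert (Hidx : forall x, In x l -> nth_error l (idx x) = Some x).
{ intros x Hx. unfold idx. destruct (ClassicalEpsilon.constructive_indefinite_description _ _) as [z Hz]. simpl. auto. }
set (iota := fun x => if excluded_middle_informative (dom x) then (x, O) else (y0, S (idx x))).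
assert (Hiota : forall x, dom (fst (iota x))).
{ intros x. unfold iota. destruct (excluded_middle_informative (dom x)); simpl; auto. }
exists (fun x n => g (fst (iota x)) (pr (snd (iota x)) n)).
split.
- intros x n Xx. apply domX. eapply Mr. apply Hg, Hiota.
- intros x n x' n' Xx Xx' E.
  assert (H1 := Hg _ (pr (snd (iota x)) n) (Hiota x)).
  assert (H2 := Hg _ (pr (snd (iota x')) n') (Hiota x')).
  rewrite E in H1. destruct (Mi _ _ _ _ _ H1 H2) as [E1 E2]. apply pr_inj in E2. destruct E2 as [Es En]; subst n'.
  split; auto.
  assert (Ei : iota x = iota x').
  { destruct (iota x), (iota x'); simpl in *; subst; reflexivity. }
  unfold iota in Ei.
  destruct (excluded_middle_informative (dom x)) as [d|nd];
  destruct (excluded_middle_informative (dom x')) as [d'|nd']; try discriminate.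
  + injection Ei; auto.
  + injection Ei; intros Ek. 
    assert (A1 := Hidx x (Hl x Xx nd)). assert (A2 := Hidx x' (Hl x' Xx' nd')).
    rewrite Ek in A1. rewrite A1 in A2. injection A2; auto.
Qed.

Open Scope R_scope.

Definition zcode (z : Z) : nat := pr (Z.to_nat z) (Z.to_nat (- z)).
Definition qcode (q : Q) : nat := pr (zcode (Qnum q)) (Pos.to_nat (Qden q)).

Lemma qcode_inj : forall p q, qcode p = qcode q -> p = q.
Proof.
intros [a b] [c d] E. unfold qcode in E.
apply pr_inj in E. destruct E as [E2 E1]. simpl in E1, E2.
unfold zcode in E2. apply pr_inj in E2. destruct E2 as [E4 E3].
assert (a = c) by lia. assert (b = d) by lia. subst; reflexivity.
Qed.

Lemma Q2R_0 : Q2R 0 = 0. Proof. unfold Q2R; simpl; lra. Qed.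
Lemma Q2R_1 : Q2R 1 = 1. Proof. unfold Q2R; simpl; lra. Qed.
Lemma Q2R_Z (z : Z) : Q2R (inject_Z z) = IZR z. Proof. unfold Q2R; simpl; lra. Qed.

Lemma Q2R_nz (q : Q) : Q2R q <> 0 -> ~ Qeq q 0.
Proof. intros H E. apply H. rewrite <- Q2R_0. apply Qeq_eqR. exact E. Qed.

Lemma Q2R_inv' (q : Q) : Q2R q <> 0 -> Q2R (/ q) = / Q2R q.
Proof. intros H. apply Q2R_inv, Q2R_nz, H. Qed.

Lemma Qdense (u v : R) : u < v -> exists q : Q, u < Q2R q < v.
Proof.
intros Huv.
destruct (archimed (/ (v - u))) as [A1 _].
set (n := up (/ (v - u))) in *.
assert (Hvu : 0 < / (v - u)) by (apply Rinv_0_lt_compat; lra).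
assert (Hn : (0 < n)%Z) by (apply lt_IZR; lra).
destruct (archimed (u * IZR n)) as [B1 B2].
set (m := up (u * IZR n)) in *.
exists (Qmake m (Z.to_pos n)).
unfold Q2R; simpl. rewrite Z2Pos.id; [|lia].
assert (Hn' : 0 < IZR n) by (apply IZR_lt; lia).
split.
- apply Rmult_lt_reg_r with (IZR n); auto. field_simplify; lra.
- apply Rmult_lt_reg_r with (IZR n); auto. field_simplify; [|lra].
  assert (1 < (v - u) * IZR n).
  { apply Rmult_lt_reg_l with (/ (v-u)); auto. field_simplify; lra. }
  nra.
Qed.

Lemma no_sqrt2_Z : forall k : nat, forall p d : Z, Z.abs_nat d = k -> (p * p = 2 * d * d)%Z -> d = 0%Z.
Proof.
intros k. induction k as [k IH] using (well_founded_induction lt_wf).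
intros p d Hk E.
destruct (Z.Even_or_Odd p) as [[p' Hp]|[p' Hp]]; subst p; [|exfalso; nia].
assert (E2 : (d * d = 2 * p' * p')%Z) by nia.
destruct (Z.Even_or_Odd d) as [[d' Hd]|[d' Hd]]; subst d; [|exfalso; nia].
destruct (Z.eq_dec d' 0) as [->|nz]; [lia|].
exfalso.
assert (E3 : (p' * p' = 2 * d' * d')%Z) by nia.
assert (d' = 0%Z).
{ apply (IH (Z.abs_nat d')) with (p := p'); auto. rewrite <- Hk. lia. }
lia.
Qed.

Lemma sqrt2_irr : forall q : Q, Q2R q <> sqrt 2.
Proof.
intros [p d] E. unfold Q2R in E; simpl in E.
assert (Hd : 0 < IZR (Z.pos d)) by (apply IZR_lt; lia).
assert (E2 : IZR p * IZR p = 2 * IZR (Z.pos d) * IZR (Z.pos d)).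
{ assert (E1 : IZR p = sqrt 2 * IZR (Z.pos d)) by (rewrite <- E; field; lra).
  rewrite E1. assert (S := sqrt_sqrt 2 ltac:(lra)).
  transitivity ((sqrt 2 * sqrt 2) * IZR (Z.pos d) * IZR (Z.pos d)); [ring|].
  rewrite S. ring. }
rewrite <- !mult_IZR in E2. apply eq_IZR in E2.
assert (Z.pos d = 0%Z) by (eapply no_sqrt2_Z; eauto). lia.
Qed.

Definition theta := sqrt 2.

Definition PS (H : R -> Prop) := (forall x y, H x -> H y -> H (x+y)) /\
  (forall q x, H x -> H (Q2R q * x)) /\ (forall x, H x -> forall q, H (Q2R q)) /\ ~ H theta.

Lemma subspace_exists : exists H : R -> Prop,
  (forall x y, H x -> H y -> H (x+y)) /\ (forall q x, H x -> H (Q2R q * x)) /\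
  (forall q, H (Q2R q)) /\ ~ H theta /\
  (forall x, exists h r, H h /\ x = h + Q2R r * theta).
Proof.
destruct (zorn_sets R PS) as [M [PM Mmax]].
{ intros F FP Ftot. split; [|split; [|split]].
  - intros x y [G1 [F1 G1x]] [G2 [F2 G2y]].
    destruct (Ftot G1 G2 F1 F2) as [S|S].
    + exists G2. split; auto. apply (proj1 (FP G2 F2)); auto.
    + exists G1. split; auto. apply (proj1 (FP G1 F1)); auto.
  - intros q x [G [FG Gx]]. exists G. split; auto. apply (proj1 (proj2 (FP G FG))); auto.
  - intros x [G [FG Gx]] q. exists G. split; auto. apply (proj1 (proj2 (proj2 (FP G FG))) x); auto.
  - intros [G [FG Gt]]. apply (proj2 (proj2 (proj2 (FP G FG)))); auto. }
destruct PM as [Madd [Mscal [MQ Mth]]].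
assert (Mne : exists x, M x).
{ apply Classical_Prop.NNPP. intros Hn.
  apply (Mmax (fun x => exists q, x = Q2R q)).
  - intros x Mx. exfalso. apply Hn. exists x; auto.
  - exists (Q2R 0). split; [exists 0%Q; auto|]. intros Mx. apply Hn. exists (Q2R 0); auto.
  - split; [|split; [|split]].
    + intros x y [q1 ->] [q2 ->]. exists (q1 + q2)%Q. rewrite Q2R_plus. reflexivity.
    + intros q x [q1 ->]. exists (q * q1)%Q. rewrite Q2R_mult. reflexivity.
    + intros x _ q. exists q; reflexivity.
    + intros [q E]. apply (sqrt2_irr q). rewrite <- E. reflexivity. }
destruct Mne as [x0 Mx0].
assert (MQ' : forall q, M (Q2R q)) by (intros q; apply (MQ x0 Mx0)).
assert (M0 : M 0) by (rewrite <- Q2R_0; apply MQ').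
exists M. split; [exact Madd|split; [exact Mscal|split; [exact MQ'|split; [exact Mth|]]]].
intros x.
destruct (Classical_Prop.classic (M x)) as [Mx|nMx].
{ exists x, 0%Q. split; auto. rewrite Q2R_0. ring. }
set (H' := fun z => exists h q, M h /\ z = h + Q2R q * x).
assert (Hth : H' theta).
{ apply Classical_Prop.NNPP. intros nth.
  apply (Mmax H').
  - intros z Mz. exists z, 0%Q. split; auto. rewrite Q2R_0. ring.
  - exists x. split; auto. exists 0, 1%Q. split; auto. rewrite Q2R_1. ring.
  - split; [|split; [|split]].
    + intros a b [h1 [q1 [M1 ->]]] [h2 [q2 [M2 ->]]]. exists (h1 + h2), (q1 + q2)%Q.
      split; [apply Madd; auto|]. rewrite Q2R_plus. ring.
    + intros q a [h1 [q1 [M1 ->]]]. exists (Q2R q * h1), (q * q1)%Q.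
      split; [apply Mscal; auto|]. rewrite Q2R_mult. ring.
    + intros a _ q. exists (Q2R q), 0%Q. split; auto. rewrite Q2R_0. ring.
    + exact nth. }
destruct Hth as [h [q [Mh E]]].
assert (Hq : Q2R q <> 0).
{ intros Hq. apply Mth. rewrite E Hq. replace (h + 0 * x) with h by ring. exact Mh. }
exists (Q2R (- / q) * h), (/ q)%Q. split; [apply Mscal; auto|].
rewrite Q2R_opp Q2R_inv'; auto.
rewrite E. field. exact Hq.
Qed.

Lemma open_int_conv a b u v w : open_int a b u -> open_int a b v -> u <= w <= v -> open_int a b w.
Proof.
unfold open_int. intros [Hu1 Hu2] [Hv1 Hv2] [H1 H2].
split.
- destruct a as [a| |]; simpl in *; auto; lra.
- destruct b as [b| |]; simpl in *; auto; lra.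
Qed.

Definition fl (x : R) : Z := (up x - 1)%Z.

Lemma fl_spec x : IZR (fl x) <= x < IZR (fl x) + 1.
Proof.
unfold fl. destruct (archimed x) as [H1 H2]. rewrite minus_IZR. lra.
Qed.

Lemma fl_unique x n : IZR n <= x < IZR n + 1 -> fl x = n.
Proof.
intros [H1 H2]. unfold fl.
assert (E : (n + 1)%Z = up x).
{ apply tech_up; rewrite plus_IZR; lra. }
rewrite <- E. lia.
Qed.

Lemma fl_mono x y : x <= y -> (fl x <= fl y)%Z.
Proof.
intros Hxy. destruct (Z_le_gt_dec (fl x) (fl y)) as [L|L]; auto.
exfalso. assert (L' : (fl y + 1 <= fl x)%Z) by lia. apply IZR_le in L'.
rewrite plus_IZR in L'. destruct (fl_spec x). destruct (fl_spec y). lra.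
Qed.

Lemma iso_of_seq (X : R->Prop) (a b : Rbar) (xs : Z -> Q) :
  (forall x q r, X x -> 0 < Q2R q -> X (Q2R q * x + Q2R r)) ->
  (forall n, open_int a b (Q2R (xs n))) ->
  (forall n, Q2R (xs n) < Q2R (xs (n+1)%Z)) ->
  (forall y, open_int a b y -> exists m, Q2R (xs m) <= y) ->
  (forall y, open_int a b y -> exists M, y < Q2R (xs M)) ->
  order_iso X (inter X (open_int a b)).
Proof.
intros Hcl Hin Hinc Hlo Hhi.
assert (mono : forall k m, Q2R (xs m) <= Q2R (xs (m + Z.of_nat k)%Z)).
{ induction k as [|k IH]; intros m.
  - rewrite Z.add_0_r. lra.
  - replace (m + Z.of_nat (S k))%Z with ((m + Z.of_nat k) + 1)%Z by lia.
    specialize (IH m). specialize (Hinc (m + Z.of_nat k)%Z). lra. }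
assert (monoZ : forall m n, (m <= n)%Z -> Q2R (xs m) <= Q2R (xs n)).
{ intros m n L. replace n with (m + Z.of_nat (Z.to_nat (n - m)))%Z by lia. apply mono. }
set (d := fun n => (xs (n+1)%Z - xs n)%Q).
assert (Hd : forall n, 0 < Q2R (d n)).
{ intros n. unfold d. rewrite Q2R_minus. specialize (Hinc n). lra. }
assert (Hd' : forall n, Q2R (d n) = Q2R (xs (n+1)%Z) - Q2R (xs n)).
{ intros n. unfold d. rewrite Q2R_minus. reflexivity. }
set (f := fun x => Q2R (xs (fl x)) + (x - IZR (fl x)) * Q2R (d (fl x))).
assert (fbounds : forall x, Q2R (xs (fl x)) <= f x < Q2R (xs (fl x + 1)%Z)).
{ intros x. unfold f. destruct (fl_spec x) as [H1 H2]. rewrite Hd'.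
  specialize (Hd (fl x)). rewrite Hd' in Hd. split; nra. }
exists f. split; [|split].
- intros x Xx. split.
  + unfold f. set (n := fl x).
    replace (Q2R (xs n) + (x - IZR n) * Q2R (d n)) with
      (Q2R (d n) * x + Q2R (xs n - inject_Z n * d n)%Q).
    * apply Hcl; auto.
    * rewrite Q2R_minus Q2R_mult Q2R_Z. ring.
  + destruct (fbounds x) as [H1 H2].
    apply open_int_conv with (u := Q2R (xs (fl x))) (v := Q2R (xs (fl x + 1)%Z)); auto. lra.
- intros y [Xy Iy].
  destruct (Hlo y Iy) as [m Hm]. destruct (Hhi y Iy) as [Mx HM].
  assert (Hmm : (m < Mx)%Z).
  { destruct (Z_lt_le_dec m Mx) as [L|L]; auto. apply monoZ in L. lra. }
  assert (Hfind : forall k m, Q2R (xs m) <= y -> y < Q2R (xs (m + Z.of_nat k)%Z) ->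
             exists n, Q2R (xs n) <= y < Q2R (xs (n+1)%Z)).
  { induction k as [|k IH]; intros m0 H1 H2.
    - rewrite Z.add_0_r in H2. lra.
    - destruct (Rlt_le_dec y (Q2R (xs (m0+1)%Z))) as [L|L].
      + exists m0; split; auto.
      + apply (IH (m0+1)%Z); auto.
        replace (m0 + 1 + Z.of_nat k)%Z with (m0 + Z.of_nat (S k))%Z by lia. auto. }
  destruct (Hfind (Z.to_nat (Mx - m)) m Hm) as [n [Hn1 Hn2]].
  { replace (m + Z.of_nat (Z.to_nat (Mx - m)))%Z with Mx by lia. auto. }
  assert (Hdn := Hd n). rewrite Hd' in Hdn.
  set (x := IZR n + (y - Q2R (xs n)) / Q2R (d n)).
  assert (Hfl : fl x = n).
  { apply fl_unique. unfold x. rewrite Hd'. split.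
    - assert (0 <= (y - Q2R (xs n)) / (Q2R (xs (n + 1)%Z) - Q2R (xs n))).
      { unfold Rdiv. apply Rmult_le_pos; [lra|]. left. apply Rinv_0_lt_compat. lra. } lra.
    - assert ((y - Q2R (xs n)) / (Q2R (xs (n + 1)%Z) - Q2R (xs n)) < 1).
      { apply Rmult_lt_reg_r with (Q2R (xs (n + 1)%Z) - Q2R (xs n)); [lra|].
        field_simplify; lra. }
      lra. }
  exists x. split.
  + unfold x. 
    replace (IZR n + (y - Q2R (xs n)) / Q2R (d n)) with
      (Q2R (/ d n) * y + Q2R (inject_Z n - xs n / d n)%Q).
    * apply Hcl; auto. rewrite Q2R_inv'; [|specialize (Hd n); lra].
      apply Rinv_0_lt_compat; auto.
    * assert (Hdnz : Q2R (d n) <> 0) by (specialize (Hd n); lra).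
      rewrite Q2R_minus Q2R_div; [|apply Q2R_nz; auto].
      rewrite Q2R_inv'; auto. rewrite Q2R_Z. field. auto.
  + unfold f. rewrite Hfl. unfold x. field.
    specialize (Hd n); lra.
- intros x y Xx Xy Lxy.
  destruct (Z.eq_dec (fl x) (fl y)) as [E|E].
  + unfold f. rewrite E. specialize (Hd (fl y)). nra.
  + assert (L : (fl x + 1 <= fl y)%Z).
    { assert (Hm := fl_mono x y (Rlt_le _ _ Lxy)). lia. }
    apply monoZ in L. destruct (fbounds x). destruct (fbounds y). lra.
Qed.

Lemma exp_cof t : 0 < t -> (exists n, exp (IZR n) < t) /\ (exists n, t < exp (IZR n)).
Proof.
intros Ht. split.
- exists (fl (ln t) - 1)%Z. rewrite <- (exp_ln t Ht) at 2. apply exp_increasing.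
  rewrite minus_IZR. destruct (fl_spec (ln t)). lra.
- exists (fl (ln t) + 1)%Z. rewrite <- (exp_ln t Ht) at 1. apply exp_increasing.
  rewrite plus_IZR. destruct (fl_spec (ln t)). lra.
Qed.

Lemma expZ_inc n : exp (IZR n) < exp (IZR (n+1)%Z).
Proof. apply exp_increasing. rewrite plus_IZR. lra. Qed.

Lemma phi_exists a b : Rbar_lt a b -> exists phi : Z -> R,
  (forall n, open_int a b (phi n)) /\ (forall n, phi n < phi (n+1)%Z) /\
  (forall y, open_int a b y -> exists m, phi m <= y) /\
  (forall y, open_int a b y -> exists M, y < phi M).
Proof.
intros Hab. unfold open_int.
destruct a as [a| |]; destruct b as [b| |]; simpl in Hab; try contradiction.
-
  exists (fun n => b - (b - a) / (1 + exp (IZR n))).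
  assert (key : forall E, 0 < E -> 0 < (b - a) / (1 + E) < b - a).
  { intros E HE. split.
    - unfold Rdiv. apply Rmult_lt_0_compat; [lra|apply Rinv_0_lt_compat; lra].
    - apply Rmult_lt_reg_r with (1 + E); [lra|]. unfold Rdiv.
      rewrite Rmult_assoc Rinv_l; [|lra]. nra. }
  split; [|split; [|split]].
  + intros n. simpl. destruct (key _ (exp_pos (IZR n))). split; lra.
  + intros n. assert (Hi := expZ_inc n). assert (H0 := exp_pos (IZR n)).
    assert ((b - a) / (1 + exp (IZR (n+1)%Z)) < (b - a) / (1 + exp (IZR n))).
    { unfold Rdiv. apply Rmult_lt_compat_l; [lra|]. apply Rinv_lt_contravar; nra. }
    lra.
  + intros y [H1 H2]. simpl in H1, H2.
    destruct (exp_cof ((y - a) / (b - y))) as [[m Hm] _].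
    { unfold Rdiv. apply Rmult_lt_0_compat; [lra|apply Rinv_0_lt_compat; lra]. }
    exists m. set (E := exp (IZR m)) in *. assert (HE := exp_pos (IZR m)). fold E in HE.
    assert (E * (b - y) < y - a).
    { apply Rmult_lt_reg_r with (/ (b - y)); [apply Rinv_0_lt_compat; lra|].
      rewrite Rmult_assoc Rinv_r; [|lra]. lra. }
    assert (b - y <= (b - a) / (1 + E)).
    { apply Rmult_le_reg_r with (1 + E); [lra|]. unfold Rdiv.
      rewrite Rmult_assoc Rinv_l; [|lra]. nra. }
    lra.
  + intros y [H1 H2]. simpl in H1, H2.
    destruct (exp_cof ((y - a) / (b - y))) as [_ [m Hm]].
    { unfold Rdiv. apply Rmult_lt_0_compat; [lra|apply Rinv_0_lt_compat; lra]. }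
    exists m. set (E := exp (IZR m)) in *. assert (HE := exp_pos (IZR m)). fold E in HE.
    assert (y - a < E * (b - y)).
    { apply Rmult_lt_reg_r with (/ (b - y)); [apply Rinv_0_lt_compat; lra|].
      rewrite Rmult_assoc Rinv_r; [|lra]. lra. }
    assert ((b - a) / (1 + E) < b - y).
    { apply Rmult_lt_reg_r with (1 + E); [lra|]. unfold Rdiv.
      rewrite Rmult_assoc Rinv_l; [|lra]. nra. }
    lra.
-
  exists (fun n => a + exp (IZR n)). split; [|split; [|split]].
  + intros n. simpl. split; auto. assert (H0 := exp_pos (IZR n)). lra.
  + intros n. assert (Hi := expZ_inc n). lra.
  + intros y [H1 _]. simpl in H1. destruct (exp_cof (y - a)) as [[m Hm] _]; [lra|].
    exists m. lra.
  + intros y [H1 _]. simpl in H1. destruct (exp_cof (y - a)) as [_ [m Hm]]; [lra|].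
    exists m. lra.
-
  exists (fun n => b - exp (IZR (- n))). split; [|split; [|split]].
  + intros n. simpl. split; auto. assert (H0 := exp_pos (IZR (-n))). lra.
  + intros n. assert (Hi := expZ_inc (- (n+1))). 
    replace (- (n + 1) + 1)%Z with (- n)%Z in Hi by lia. lra.
  + intros y [_ H2]. simpl in H2. destruct (exp_cof (b - y)) as [_ [m Hm]]; [lra|].
    exists (- m)%Z. rewrite Z.opp_involutive. lra.
  + intros y [_ H2]. simpl in H2. destruct (exp_cof (b - y)) as [[m Hm] _]; [lra|].
    exists (- m)%Z. rewrite Z.opp_involutive. lra.
-
  exists (fun n => IZR n). split; [|split; [|split]].
  + intros n. simpl. auto.
  + intros n. rewrite plus_IZR. lra.
  + intros y _. exists (fl y). apply fl_spec.
  + intros y _. exists (fl y + 1)%Z. rewrite plus_IZR. destruct (fl_spec y). lra.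
Qed.

Lemma xs_exists a b : Rbar_lt a b -> exists xs : Z -> Q,
  (forall n, open_int a b (Q2R (xs n))) /\ (forall n, Q2R (xs n) < Q2R (xs (n+1)%Z)) /\
  (forall y, open_int a b y -> exists m, Q2R (xs m) <= y) /\
  (forall y, open_int a b y -> exists M, y < Q2R (xs M)).
Proof.
intros Hab. destruct (phi_exists a b Hab) as [phi [Hin [Hinc [Hlo Hhi]]]].
set (xs := fun n => proj1_sig (ClassicalEpsilon.constructive_indefinite_description _
                   (Qdense _ _ (Hinc n)))).
assert (Hxs : forall n, phi n < Q2R (xs n) < phi (n+1)%Z).
{ intros n. unfold xs. destruct (ClassicalEpsilon.constructive_indefinite_description _ _). simpl. auto. }
exists xs. split; [|split; [|split]].
- intros n. destruct (Hxs n). apply open_int_conv with (u := phi n) (v := phi (n+1)%Z); auto. lra.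
- intros n. destruct (Hxs n). destruct (Hxs (n+1)%Z). lra.
- intros y Hy. destruct (Hlo y Hy) as [m Hm]. exists (m - 1)%Z.
  destruct (Hxs (m-1)%Z). replace (m - 1 + 1)%Z with m in * by lia. lra.
- intros y Hy. destruct (Hhi y Hy) as [m Hm]. exists m. destruct (Hxs m). lra.
Qed.

Lemma homog_of_closed (X : R -> Prop) :
  (forall x q r, X x -> 0 < Q2R q -> X (Q2R q * x + Q2R r)) -> homogeneous X.
Proof.
intros Hcl a b Hab. destruct (xs_exists a b Hab) as [xs [H1 [H2 [H3 H4]]]].
eapply iso_of_seq; eauto.
Qed.

Lemma iso_trans X Y Z : order_iso X Y -> order_iso Y Z -> order_iso X Z.
Proof.
intros [f [f1 [f2 f3]]] [g [g1 [g2 g3]]].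
exists (fun x => g (f x)). split; [|split].
- intros x Xx. auto.
- intros z Zz. destruct (g2 z Zz) as [y [Yy <-]]. destruct (f2 y Yy) as [x [Xx <-]].
  exists x; auto.
- intros x y Xx Xy L. apply g3; auto.
Qed.

Lemma iso_sym X Y : order_iso X Y -> order_iso Y X.
Proof.
intros [f [f1 [f2 f3]]].
set (g := fun y => ClassicalEpsilon.epsilon (inhabits 0) (fun x => X x /\ f x = y)).
assert (Hg : forall y, Y y -> X (g y) /\ f (g y) = y).
{ intros y Yy. unfold g. apply ClassicalEpsilon.epsilon_spec. auto. }
exists g. split; [|split].
- intros y Yy. apply Hg; auto.
- intros x Xx. exists (f x). split; auto.
  destruct (Hg (f x) (f1 x Xx)) as [H1 H2].
  destruct (Rtotal_order (g (f x)) x) as [L|[E|L]]; auto.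
  + apply f3 in L; auto. lra.
  + apply f3 in L; auto. lra.
- intros y y' Yy Yy' L.
  destruct (Hg y Yy) as [H1 H2]. destruct (Hg y' Yy') as [H1' H2'].
  destruct (Rlt_le_dec (g y) (g y')) as [L'|L']; auto.
  exfalso. destruct L' as [L'|E].
  + apply f3 in L'; auto. lra.
  + rewrite E in H2'. rewrite H2 in H2'. lra.
Qed.

Definition rsh (a : Rbar) (c : R) : Rbar :=
  match a with Rbar.Finite x => Rbar.Finite (x + c) | t => t end.

Lemma rsh_lt a b c : Rbar_lt a b -> Rbar_lt (rsh a c) (rsh b c).
Proof. destruct a, b; simpl; auto; lra. Qed.

Lemma open_int_sh a b c x : open_int (rsh a (- c)) (rsh b (- c)) (x - c) <-> open_int a b x.
Proof. unfold open_int. destruct a, b; simpl; split; intros [H1 H2]; split; auto; lra. Qed.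

Lemma Q2R_m1 : Q2R (-1) = -1. Proof. unfold Q2R; simpl; lra. Qed.

Theorem mainTheorem10 :
  forall K : R -> Prop, infinite_set K ->
    (exists A B : R -> Prop,
        disjoint A B /\ equipotent A K /\ equipotent B K /\
        homogeneous A /\ homogeneous B /\ everywhere_isomorphic A B) /\
    (exists X : R -> Prop, equipotent X K /\ homogeneous X).
Proof.
intros K HK.
destruct subspace_exists as [M [Madd [Mscal [MQ [Mth Mdec]]]]].
assert (Minf : inf_set M).
{ apply inj_seq_inf with (s := fun n => Q2R (inject_Z (Z.of_nat n))).
  - intros n. apply MQ.
  - intros n m E. rewrite !Q2R_Z in E. apply eq_IZR in E. lia. }
destruct (CL M Minf) as [fM [fM1 fM2]].
set (hx := fun x => proj1_sig (ClassicalEpsilon.constructive_indefinite_description _ (Mdec x))).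
assert (Hhx : forall x, exists r, M (hx x) /\ x = hx x + Q2R r * theta).
{ intros x. unfold hx. destruct (ClassicalEpsilon.constructive_indefinite_description _ _). simpl. auto. }
set (rx := fun x => proj1_sig (ClassicalEpsilon.constructive_indefinite_description _ (Hhx x))).
assert (Hrx : forall x, M (hx x) /\ x = hx x + Q2R (rx x) * theta).
{ intros x. unfold rx. destruct (ClassicalEpsilon.constructive_indefinite_description _ _). simpl. auto. }
set (psi := fun x => fM (hx x) (qcode (rx x))).
assert (psiM : forall x, M (psi x)) by (intros x; apply fM1, Hrx).
assert (psi_inj : forall x y, psi x = psi y -> x = y).
{ intros x y E. apply fM2 in E; [|apply Hrx|apply Hrx]. destruct E as [E1 E2].
  apply qcode_inj in E2. destruct (Hrx x) as [_ Ex]. destruct (Hrx y) as [_ Ey].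
  rewrite Ex Ey E1 E2. reflexivity. }
set (A := fun x => exists q r k, K k /\ 0 < Q2R q /\ x = Q2R q * psi k + Q2R r).
assert (Acl : forall x q r, A x -> 0 < Q2R q -> A (Q2R q * x + Q2R r)).
{ intros x q r [q1 [r1 [k [Kk [Hq1 ->]]]]] Hq.
  exists (q * q1)%Q, (q * r1 + r)%Q, k. split; auto. rewrite Q2R_mult Q2R_plus Q2R_mult.
  split; [apply Rmult_lt_0_compat; auto| ring]. }
assert (AM : forall x, A x -> M x).
{ intros x [q [r [k [_ [_ ->]]]]]. apply Madd; [apply Mscal, psiM|apply MQ]. }
assert (AK : equipotent A K).
{ destruct (CL K HK) as [fK [fK1 fK2]].
  set (t := fun a => ClassicalEpsilon.epsilon (inhabits (0%Q, 0%Q, 0))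
        (fun t : Q * Q * R => K (snd t) /\ 0 < Q2R (fst (fst t)) /\
           a = Q2R (fst (fst t)) * psi (snd t) + Q2R (snd (fst t)))).
  assert (Ht : forall a, A a -> K (snd (t a)) /\ 0 < Q2R (fst (fst (t a))) /\
           a = Q2R (fst (fst (t a))) * psi (snd (t a)) + Q2R (snd (fst (t a)))).
  { intros a [q [r [k Hk]]]. unfold t. apply ClassicalEpsilon.epsilon_spec.
    exists (q, r, k). simpl. exact Hk. }
  apply CB_R with (f := fun a => fK (snd (t a)) (pr (qcode (fst (fst (t a)))) (qcode (snd (fst (t a))))))
    (g := psi).
  - intros a Aa. apply fK1. apply Ht; auto.
  - intros a a' Aa Aa' E. apply fK2 in E; [|apply Ht; auto|apply Ht; auto].
    destruct E as [E1 E2]. apply pr_inj in E2. destruct E2 as [E2 E3].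
    apply qcode_inj in E2. apply qcode_inj in E3.
    destruct (Ht a Aa) as [_ [_ Ea]]. destruct (Ht a' Aa') as [_ [_ Ea']].
    rewrite Ea Ea' E1 E2 E3. reflexivity.
  - intros k Kk. exists 1%Q, 0%Q, k. rewrite Q2R_1 Q2R_0. split; auto. split; [lra|ring].
  - intros x y _ _. apply psi_inj. }
set (B := fun y => A (y - theta)).
assert (HA : homogeneous A) by (apply homog_of_closed; auto).
assert (HB : homogeneous B).
{ intros a b Hab.
  destruct (HA (rsh a (- theta)) (rsh b (- theta)) (rsh_lt a b _ Hab)) as [f [f1 [f2 f3]]].
  exists (fun x => f (x - theta) + theta). split; [|split].
  - intros x Bx. destruct (f1 (x - theta) Bx) as [H1 H2]. split.
    + unfold B. replace (f (x - theta) + theta - theta) with (f (x - theta)) by ring. auto.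
    + apply open_int_sh with (c := theta).
      replace (f (x - theta) + theta - theta) with (f (x - theta)) by ring. auto.
  - intros y [By Iy]. destruct (f2 (y - theta)) as [x [Ax Ex]].
    { split; auto. apply open_int_sh; auto. }
    exists (x + theta). split.
    + unfold B. replace (x + theta - theta) with x by ring. auto.
    + replace (x + theta - theta) with x by ring. rewrite Ex. ring.
  - intros x y Bx By L. assert (f (x - theta) < f (y - theta)) by (apply f3; auto; lra). lra. }
assert (AB : order_iso A B).
{ exists (fun x => x + theta). split; [|split].
  - intros x Ax. unfold B. replace (x + theta - theta) with x by ring. auto.
  - intros y By. exists (y - theta). split; auto. ring.
  - intros x y _ _ L. lra. }
split; [|exists A; split; auto].
exists A, B. split; [|split; [auto|split; [|split; [auto|split; [auto|]]]]].
- intros x [Ax Bx]. apply Mth. apply AM in Ax. apply AM in Bx.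
  replace theta with (x + Q2R (-1) * (x - theta)) by (rewrite Q2R_m1; ring).
  apply Madd; auto.
- destruct AK as [h [h1 [h2 h3]]].
  exists (fun y => h (y - theta)). split; [|split].
  + intros y By. apply h1. exact By.
  + intros k Kk. destruct (h2 k Kk) as [x [Ax Ex]]. exists (x + theta). split.
    * unfold B. replace (x + theta - theta) with x by ring. auto.
    * replace (x + theta - theta) with x by ring. auto.
  + intros x y Bx By E. apply h3 in E; auto. lra.
- intros a b Hab. apply iso_trans with A.
  + apply iso_sym. apply HA; auto.
  + apply iso_trans with B; auto.
Qed.
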